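(* Let $n>5$ with $n\equiv 3\pmod 4$, and consider odd $r\in[3,n-4]$. Then $E(D_n^s[r,n-r-1])$ attains its maximum at $r=3$, and $$E(D_n^s[3,n-4])>E(D_n^s[5,n-6])>\dots>E\!\left(D_n^s\!\left[\tfrac{n-1}{2},\tfrac{n-1}{2}\right]\right),$$ the chain running over odd $r=3,5,7,\dots,\frac{n-1}{2}$.
   Context: A signed digraph (sidigraph) is a digraph in which every arc carries a sign $+1$ or $-1$; the energy of a sidigraph is the sum of the absolute values of the real parts of the eigenvalues of its signed adjacency matrix. For $k\ge 2$, $C_k$ denotes a directed cycle of length $k$ all of whose arc signs multiply to $+1$. It is known that for odd $k$, $E(C_k)=\csc\frac{\pi}{2k}$ (and the same holds for a negative cycle of odd length). For integers $p,q\ge2$ with $p+q\le n$, $D_n^s[p,q]$ denotes an $n$-vertex sidigraph whose only directed cycles are two vertex-disjoint positive cycles $C_p$ and $C_q$ (other vertices lie on no directed cycle); its energy is $E(C_p)+E(C_q)$. *)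

(* Defs.v *)
From Stdlib Require Import Reals Arith.
Open Scope R_scope.

(* Energy of a (positive or negative) directed cycle C_k of ODD length k,
   as given in the context: E(C_k) = csc(pi/(2k)).  Only used for odd k. *)
Definition energy_cycle (k : nat) : R := / sin (PI / (2 * INR k)).

(* Energy of D_n^s[p,q] (two vertex-disjoint positive cycles C_p, C_q on n
   vertices): E(D_n^s[p,q]) = E(C_p) + E(C_q), as given in the context. *)
Definition energy_D (n p q : nat) : R := energy_cycle p + energy_cycle q.

(* Main.v *)
Require Import Defs.
From Stdlib Require Import Reals Arith.
From Stdlib Require Import Lra Lia Psatz.
From Coquelicot Require Import Coquelicot.
Open Scope R_scope.
Lemma sin_upper u : 0 <= u -> u <= 2 -> sin u <= u - u^3/6 + u^5/120.
Proof.
  intros H0 H1. assert (HP := PI2_3_2).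
  destruct (SIN u H0 ltac:(lra)) as [_ H].
  unfold sin_ub, sin_approx, sin_term in H. cbn [sum_f_R0 Nat.mul Nat.add] in H.
  rewrite !fact_simpl, !mult_INR in H. simpl INR in H.
  match type of H with _ <= ?R => assert (E: R = u - u^3/6 + u^5/120 - u^7/5040 + u^9/362880) by field end.
  rewrite E in H.
  assert (0 <= u^7) by (apply pow_le; lra).
  assert (u^9 = u^7 * (u*u)) by ring.
  assert (u^7 * (u*u) <= u^7 * 72) by (apply Rmult_le_compat_l; nra).
  lra.
Qed.
Lemma cos_lower u : 0 <= u -> u <= 3/2 -> 1 - u^2/2 <= cos u.
Proof.
  intros H0 H1. assert (HP := PI2_3_2).
  destruct (COS u ltac:(lra) ltac:(lra)) as [H _].
  unfold cos_lb, cos_approx, cos_term in H. cbn [sum_f_R0 Nat.mul Nat.add] in H.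
  rewrite !fact_simpl, !mult_INR in H. simpl INR in H.
  match type of H with ?R <= _ => assert (E: R = 1 - u^2/2 + u^4/24 - u^6/720) by field end.
  rewrite E in H.
  assert (0 <= u^4) by (apply pow_le; lra).
  assert (u^6 = u^4 * (u*u)) by ring.
  assert (u^4 * (u*u) <= u^4 * 30) by (apply Rmult_le_compat_l; nra).
  lra.
Qed.

Lemma key_ineq t : 0 < t -> t <= 2/3 -> 2 * sin t * cos t < t * (1 + cos t ^ 2).
Proof.
  intros H0 H1.
  rewrite <- sin_2a.
  assert (Hc : cos t ^ 2 = (1 + cos (2*t)) / 2) by (rewrite cos_2a_cos; field).
  rewrite Hc.
  set (u := 2*t).
  assert (Hs := sin_upper u ltac:(unfold u; lra) ltac:(unfold u; lra)).
  assert (Hco := cos_lower u ltac:(unfold u; lra) ltac:(unfold u; lra)).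
  assert (Ht : t = u/2) by (unfold u; field). rewrite Ht.
  assert (0 < u) by (unfold u; lra).
  assert (u <= 4/3) by (unfold u; lra).
  assert (0 < u^3) by (apply pow_lt; lra).
  assert (u^5 = u^3 * (u*u)) by ring.
  assert (u^3 * (u*u) < u^3 * 5) by (apply Rmult_lt_compat_l; nra).
  assert (u/2 * (1 + (1 + cos u)/2) >= u/2 * (1 + (1 + (1 - u^2/2))/2)).
  { apply Rle_ge, Rmult_le_compat_l; lra. }
  assert (u/2 * (1 + (1 + (1 - u^2/2))/2) = u - u^3/8) by (simpl; field).
  lra.
Qed.

Definition psi (t : R) : R := t^2 * cos t / (sin t)^2.
Definition psi' (t : R) : R := t * (2 * sin t * cos t - t * (1 + cos t ^ 2)) / (sin t)^3.

Lemma psi_deriv t : sin t <> 0 -> derivable_pt_lim psi t (psi' t).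
Proof.
  intros H. apply is_derive_Reals. unfold psi, psi'.
  auto_derive. auto.
  assert (E : 1 = sin t ^ 2 + cos t ^ 2) by (rewrite <- (sin2_cos2 t); unfold Rsqr; ring).
  replace (1 + cos t ^ 2) with (sin t ^ 2 + cos t ^ 2 + cos t ^ 2) by (rewrite <- E; ring).
  field. auto.
Qed.

Lemma psi_decr t1 t2 : 0 < t1 -> t1 < t2 -> t2 <= 2/3 -> psi t2 < psi t1.
Proof.
  intros H0 H1 H2. assert (HP := PI2_3_2).
  destruct (MVT_cor2 psi psi' t1 t2 H1) as [c [Hc1 Hc2]].
  { intros c Hc. apply psi_deriv. apply Rgt_not_eq, sin_gt_0; lra. }
  assert (Hs : 0 < sin c) by (apply sin_gt_0; lra).
  assert (Hk := key_ineq c ltac:(lra) ltac:(lra)).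
  assert (0 < / sin c ^ 3) by (apply Rinv_0_lt_compat, pow_lt; lra).
  assert (psi' c < 0).
  { unfold psi', Rdiv.
    assert (c * (2 * sin c * cos c - c * (1 + cos c ^ 2)) < 0) by nra. nra. }
  nra.
Qed.

Definition F (x : R) : R := / sin (PI / (2 * x)).
Definition F' (x : R) : R := 2 / PI * psi (PI / (2 * x)).

Lemma F_deriv x : 3 <= x -> derivable_pt_lim F x (F' x).
Proof.
  intros H. assert (HP := PI2_3_2). assert (HP4 := PI_4).
  assert (Ht : 0 < PI / (2 * x)) by (apply Rdiv_lt_0_compat; lra).
  assert (Ht2 : PI / (2 * x) < PI).
  { apply (Rmult_lt_reg_r (2*x)); [lra|]. unfold Rdiv. rewrite Rmult_assoc, Rinv_l by lra. nra. }
  assert (Hs : 0 < sin (PI / (2 * x))) by (apply sin_gt_0; lra).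
  apply is_derive_Reals. unfold F, F', psi.
  auto_derive.
  - repeat split; lra.
  - unfold Rdiv in *. set (s := sin (PI * / (2 * x))) in *. set (co := cos (PI * / (2 * x))). field. split; [lra|]. split; [lra|]. assert (PI > 0) by lra. lra.
Qed.

Lemma F'_incr x1 x2 : 3 <= x1 -> x1 < x2 -> F' x1 < F' x2.
Proof.
  intros H1 H2. assert (HP := PI2_3_2). assert (HP4 := PI_4).
  unfold F'. apply Rmult_lt_compat_l. { apply Rdiv_lt_0_compat; lra. }
  apply psi_decr.
  - apply Rdiv_lt_0_compat; lra.
  - unfold Rdiv. apply Rmult_lt_compat_l; [lra|]. apply Rinv_lt_contravar; nra.
  - apply (Rmult_le_reg_r (2*x1)); [lra|]. unfold Rdiv. rewrite Rmult_assoc, Rinv_l by lra. nra.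
Qed.

Lemma convex_step a c : 3 <= a -> a + 2 <= c -> F (a+2) - F a < F (c+2) - F c.
Proof.
  intros H1 H2.
  destruct (MVT_cor2 F F' a (a+2) ltac:(lra)) as [x1 [E1 Hx1]].
  { intros y Hy. apply F_deriv. lra. }
  destruct (MVT_cor2 F F' c (c+2) ltac:(lra)) as [x2 [E2 Hx2]].
  { intros y Hy. apply F_deriv. lra. }
  rewrite E1, E2. assert (F' x1 < F' x2) by (apply F'_incr; lra).
  replace (a + 2 - a) with 2 by ring. replace (c + 2 - c) with 2 by ring. lra.
Qed.

Definition g (n r : nat) : R := energy_D n r (n - r - 1).

Lemma g_step n r : (3 <= r)%nat -> (2 * (r + 2) <= n - 1)%nat -> g n (r + 2) < g n r.
Proof.
  intros H1 H2. unfold g, energy_D, energy_cycle.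
  change (/ sin (PI / (2 * INR ?k))) with (F (INR k)).
  rewrite (minus_INR (n - (r+2)) 1) by lia. rewrite (minus_INR n (r+2)) by lia.
  rewrite (minus_INR (n - r) 1) by lia. rewrite (minus_INR n r) by lia.
  rewrite plus_INR. simpl (INR 1). simpl (INR 2).
  assert (Hr : 3 <= INR r) by (replace 3 with (INR 3) by (simpl; ring); apply le_INR; lia).
  assert (Hn : 2 * (INR r + 2) <= INR n - 1).
  { replace 2 with (INR 2) by (simpl; ring). rewrite <- plus_INR, <- mult_INR.
    replace 1 with (INR 1) by reflexivity. rewrite <- minus_INR by lia. apply le_INR. lia. }
  assert (H := convex_step (INR r) (INR n - INR r - 1 - 2) Hr ltac:(lra)).
  replace (INR n - (INR r + 2) - 1) with (INR n - INR r - 1 - 2) by ring.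
  replace (INR n - INR r - 1 - 2 + 2) with (INR n - INR r - 1) in H by ring.
  replace (1+1) with 2 by ring. replace (INR n - (INR r + 2) - 1) with (INR n - INR r - 1 - 2) by ring. lra.
Qed.

Lemma g_chain n d : forall r, (3 <= r)%nat -> (2 * (r + 2 * S d) <= n - 1)%nat ->
  g n (r + 2 * S d) < g n r.
Proof.
  induction d as [|d IH]; intros r H1 H2.
  - replace (r + 2 * 1)%nat with (r + 2)%nat by lia. apply g_step; lia.
  - replace (r + 2 * S (S d))%nat with ((r + 2) + 2 * S d)%nat by lia.
    apply Rlt_trans with (g n (r+2)).
    + apply IH; lia.
    + apply g_step; lia.
Qed.

Theorem lemma3p17 (n : nat) (hn : (5 < n)%nat) (hmod : (n mod 4 = 3)%nat) :
  (forall r : nat, Nat.Odd r -> (3 <= r <= n - 4)%nat ->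
     energy_D n r (n - r - 1) <= energy_D n 3 (n - 4)) /\
  (forall r r' : nat, Nat.Odd r -> Nat.Odd r' ->
     (3 <= r)%nat -> (r < r')%nat -> (r' <= (n - 1) / 2)%nat ->
     energy_D n r (n - r - 1) > energy_D n r' (n - r' - 1)).
Proof.
  assert (chain : forall r r' : nat, Nat.Odd r -> Nat.Odd r' ->
     (3 <= r)%nat -> (r < r')%nat -> (2 * r' <= n - 1)%nat -> g n r' < g n r).
  { intros r r' [k Hk] [k' Hk'] H1 H2 H3.
    replace r' with (r + 2 * S (k' - k - 1))%nat by lia.
    apply g_chain; lia. }
  split.
  - intros r Hr [H1 H2].
    replace (n - 4)%nat with (n - 3 - 1)%nat by lia.
    change (g n r <= g n 3).
    destruct (Nat.le_gt_cases (2 * r) (n - 1)) as [Hle|Hgt].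
    + destruct (Nat.eq_dec r 3) as [->|Hne]; [lra|].
      left. apply chain; auto. exists 1%nat; lia. lia.
    + assert (E : g n r = g n (n - r - 1)).
      { unfold g, energy_D. replace (n - (n - r - 1) - 1)%nat with r by lia. ring. }
      rewrite E.
      destruct Hr as [k Hk].
      assert (Hq := Nat.div_mod n 4 ltac:(lia)). rewrite hmod in Hq.
      destruct (Nat.eq_dec (n - r - 1) 3) as [->|Hne]; [lra|].
      left. apply chain.
      * exists 1%nat; lia.
      * exists (2 * (n / 4) - k)%nat. lia.
      * lia.
      * lia.
      * lia.
  - intros r r' Hr Hr' H1 H2 H3.
    change (g n r' < g n r). apply chain; auto.
    assert (Hd := Nat.div_mod (n - 1) 2 ltac:(lia)).
    assert (Hm := Nat.mod_upper_bound (n - 1) 2 ltac:(lia)). lia.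
Qed.
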